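(* Let $k\ge3$, let $G=(V,E)$ be a $k$-uniform hypergraph with connected components $V_1,\dots,V_s$ ($s\ge1$), and let $\mathbf x\in\mathbb R^n$ be an H-eigenvector of the Laplacian tensor $\mathcal D-\mathcal A$ (respectively, of the signless Laplacian tensor $\mathcal D+\mathcal A$) corresponding to the eigenvalue $0$. Then for every $i\in[s]$ with $\mathbf x(V_i)\ne0$: $\mathbf x(V_i)$ is an H-eigenvector of $(\mathcal D-\mathcal A)(V_i)$ (respectively $(\mathcal D+\mathcal A)(V_i)$) corresponding to the eigenvalue $0$, $\mathrm{sup}(\mathbf x(V_i))=V_i$, and there is a real $c_i\neq0$ with $x_j\in\{c_i,-c_i\}$ for all $j\in V_i$.
   Context: A $k$-uniform hypergraph $G=(V,E)$ has vertex set $V=[n]$ ($n\ge k$) and nonempty edge set $E$ of $k$-element subsets; $E_i=\{e\in E:i\in e\}$, $d_i=|E_i|$. Connected components: maximal sets of vertices pairwise joined by chains of edges with consecutive edges intersecting; an isolated vertex (singleton) is also a component. $\mathcal A$: $a_{i_1\dots i_k}=\frac1{(k-1)!}$ if $\{i_1,\dots,i_k\}\in E$, else $0$; $\mathcal D$ diagonal with $d_{i\dots i}=d_i$; so $((\mathcal D\pm\mathcal A)\mathbf x^{k-1})_i=d_ix_i^{k-1}\pm\sum_{e\in E_i}\prod_{j\in e\setminus\{i\}}x_j$. A nonzero $\mathbf x$ is an eigenvector of $\mathcal T$ for $\lambda$ if $(\mathcal T\mathbf x^{k-1})_i=\lambda x_i^{k-1}$ for all $i$; an H-eigenvector is a real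 eigenvector. $\mathcal T(S)$ is the sub-tensor with indices restricted to $S$, $\mathbf x(S)=(x_j)_{j\in S}$, and $\mathrm{sup}(\mathbf x)=\{i:x_i\ne0\}$. *)

(* Defs.v *)
From HB Require Import structures.
From mathcomp Require Import all_boot all_order all_algebra.
Set Implicit Arguments. Unset Strict Implicit. Unset Printing Implicit Defensive.
Import Order.TTheory GRing.Theory Num.Theory.
Local Open Scope ring_scope.

(* An order-k, dimension-n tensor is a function on index k-tuples
   f : {ffun 'I_k -> 'I_n}, f = (i_1,...,i_k) with i_1 = f at position 0. *)

Definition k_uniform_hypergraph (n k : nat) (E : {set {set 'I_n}}) : Prop :=
  (k <= n)%N /\ E != set0 /\ (forall e, e \in E -> #|e| = k).

Definition edges_at n (E : {set {set 'I_n}}) (i : 'I_n) : {set {set 'I_n}} :=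
  [set e in E | i \in e].
Definition deg n (E : {set {set 'I_n}}) (i : 'I_n) : nat := #|edges_at E i|.

Definition adj_tensor (R : realFieldType) n k (E : {set {set 'I_n}})
  (f : {ffun 'I_k -> 'I_n}) : R :=
  if (f @: [set: 'I_k]) \in E then ((k.-1)`!)%:R^-1 else 0.

Definition deg_tensor (R : realFieldType) n k (E : {set {set 'I_n}})
  (f : {ffun 'I_k -> 'I_n}) : R :=
  \sum_(i : 'I_n | [forall j, f j == i]) (deg E i)%:R.

Definition lap_tensor (R : realFieldType) n k (E : {set {set 'I_n}}) (signless : bool)
  (f : {ffun 'I_k -> 'I_n}) : R :=
  if signless then deg_tensor R E f + adj_tensor R E f
  else deg_tensor R E f - adj_tensor R E f.

(* (T(S) x(S)^{k-1})_i for i in S: sum over index tuples with first index i and all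
   other indices in S *)
Definition sub_apply (R : realFieldType) n k (T : {ffun 'I_k -> 'I_n} -> R)
  (S : {set 'I_n}) (x : 'I_n -> R) (i : 'I_n) : R :=
  \sum_(f : {ffun 'I_k -> 'I_n} |
          [forall j : 'I_k, if val j == 0%N then f j == i else f j \in S])
     T f * \prod_(j : 'I_k | val j != 0%N) x (f j).

Definition H_eigvec_sub (R : realFieldType) n k (T : {ffun 'I_k -> 'I_n} -> R)
  (S : {set 'I_n}) (x : 'I_n -> R) (lambda : R) : Prop :=
  (exists2 j, j \in S & x j != 0) /\
  (forall i, i \in S -> sub_apply T S x i = lambda * x i ^+ k.-1).

Definition H_eigvec (R : realFieldType) n k (T : {ffun 'I_k -> 'I_n} -> R)
  (x : 'I_n -> R) (lambda : R) : Prop := H_eigvec_sub T [set: 'I_n] x lambda.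

(* connected components: classes of the reflexive-transitive closure of
   "lie in a common edge"; isolated vertices give singleton components *)
Definition hadj n (E : {set {set 'I_n}}) : rel 'I_n :=
  fun u v => [exists e in E, (u \in e) && (v \in e)].
Definition components n (E : {set {set 'I_n}}) : {set {set 'I_n}} :=
  [set [set v | connect (hadj E) u v] | u in [set: 'I_n]].

Definition supp_on n (R : realFieldType) (x : 'I_n -> R) (S : {set 'I_n}) : {set 'I_n} :=
  [set j in S | x j != 0].

(* Main.v *)
Require Import Defs.
From HB Require Import structures.
From mathcomp Require Import all_boot all_order all_algebra.
From mathcomp Require Import ring.
Set Implicit Arguments. Unset Strict Implicit. Unset Printing Implicit Defensive.
Import Order.TTheory GRing.Theory Num.Theory.
Local Open Scope ring_scope.

Lemma prod_lift (R : comNzRingType) k (F : 'I_k.+1 -> R) :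
  \prod_(j : 'I_k.+1 | val j != 0%N) F j = \prod_(j < k) F (lift ord0 j).
Proof. by rewrite big_mkcond big_ord_recl /= mul1r. Qed.

Lemma filterS n k (f : {ffun 'I_k.+1 -> 'I_n}) i (S : {set 'I_n}) :
  [forall j : 'I_k.+1, if val j == 0%N then f j == i else f j \in S] =
  (f ord0 == i) && [forall j : 'I_k, f (lift ord0 j) \in S].
Proof.
apply/forallP/andP.
  by move=> h; split; [exact: (h ord0) | apply/forallP => j; exact: (h (lift ord0 j))].
case=> h1 /forallP h2 j; case: (unliftP ord0 j) => [j'|] -> //=.
Qed.

Lemma count_bij n k (e : {set 'I_n}) (u : 'I_n) : u \in e -> #|e| = k.+1 ->
  #|[set f : {ffun 'I_k.+1 -> 'I_n} | (f ord0 == u) && (f @: setT == e)]| = k`!.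
Proof.
move=> ue ce.
set F := [set f : {ffun 'I_k.+1 -> 'I_n} | _].
pose phi (f : {ffun 'I_k.+1 -> 'I_n}) : {ffun 'I_k -> 'I_n} := [ffun j => f (lift ord0 j)].
have ceu : #|e :\ u| = k by move: ce; rewrite (cardsD1 u e) ue => -[].
have -> : F = phi @^-1: [set g : {ffun 'I_k -> 'I_n} in ffun_on (mem (e :\ u)) | injectiveb g] :&: [set f : {ffun _ -> _} | f ord0 == u].
  apply/setP => f; rewrite !inE.
  have [fu|] := eqP; last by rewrite andbF.
  rewrite andbT; apply/idP/idP.
  - move/eqP => im.
    have injf : injective f.
      move=> a b; have /imset_injP : #|f @: setT| == #|[set: 'I_k.+1]| by rewrite im ce cardsT card_ord.
      by move=> H; apply: H; rewrite inE.
    apply/andP; split.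
      apply/ffun_onP => j; rewrite ffunE inE /= -im imset_f ?in_setT // andbT. idtac.
      by rewrite in_set1 -fu (inj_eq injf) eq_sym neq_lift.
    by apply/injectiveP => a b; rewrite !ffunE => /injf/lift_inj.
  - case/andP => /forallP gon /injectiveP ginj; rewrite /=.
    have fi : injective f.
      move=> a b; case: (unliftP ord0 a) => [a'|] ->; case: (unliftP ord0 b) => [b'|] -> //.
      + by move=> h; congr lift; apply: ginj; rewrite !ffunE.
      + by move=> h; have := gon a'; rewrite ffunE h fu !inE eqxx.
      + by move=> h; have := gon b'; rewrite ffunE -h fu !inE eqxx.
    have sub : f @: setT \subset e.
      apply/subsetP => _ /imsetP[j _ ->]; case: (unliftP ord0 j) => [j'|] ->.
        by have := gon j'; rewrite ffunE !inE => /andP[].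
      by rewrite fu.
    by rewrite eqEcard sub /= ce card_imset // cardsT card_ord.
rewrite -(card_in_imset (f := phi)); last first.
  move=> f1 f2; rewrite !inE => /andP[_ /eqP h1] /andP[_ /eqP h2] ph.
  apply/ffunP => j; case: (unliftP ord0 j) => [j'|] ->; last by rewrite h1 h2.
  by move/ffunP: ph => /(_ j'); rewrite !ffunE.
have -> : phi @: (phi @^-1: [set g : {ffun 'I_k -> 'I_n} in ffun_on (mem (e :\ u)) | injectiveb g] :&: [set f : {ffun _ -> _} | f ord0 == u]) = [set g : {ffun 'I_k -> 'I_n} in ffun_on (mem (e :\ u)) | injectiveb g].
  apply/setP => g; apply/imsetP/idP.
    by case=> f; rewrite !inE => /andP[+ _] ->.
  move=> gG; set f' := [ffun j => if unlift ord0 j is Some j' then g j' else u].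
  have pf : phi f' = g by apply/ffunP => j; rewrite !ffunE liftK.
  exists f' => //; rewrite inE; apply/andP; split; first by rewrite inE pf.
  by rewrite inE ffunE unlift_none.
rewrite (card_inj_ffuns_on 'I_k (mem (e :\ u))) card_ord.
have -> : #|mem (e :\ u)| = k by rewrite -ceu.
by rewrite ffactnn.
Qed.

Lemma sub_apply_closed (R : realFieldType) n k (E : {set {set 'I_n}}) s
  (x : 'I_n -> R) (S : {set 'I_n}) i :
  i \in S -> (forall v, hadj E i v -> v \in S) ->
  sub_apply (@lap_tensor R n k.+1 E s) S x i = sub_apply (@lap_tensor R n k.+1 E s) setT x i.
Proof.
move=> iS cl; rewrite /sub_apply.
rewrite [RHS](bigID (fun f : {ffun 'I_k.+1 -> 'I_n} => [forall j : 'I_k, f (lift ord0 j) \in S])) /=.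
rewrite [X in _ = _ + X]big1 ?addr0.
  by apply: eq_bigl => f; rewrite !filterS; case: (f ord0 == i) => //=; rewrite andb_idl // => _; apply/forallP => j; rewrite inE.
move=> f /andP[]; rewrite filterS => /andP[/eqP f0 _] nS.
have [j /negP jn] : exists j, f (lift ord0 j) \notin S by apply/existsP; rewrite -negb_forall.
suff -> : lap_tensor R E s f = 0 by rewrite mul0r.
have D0 : deg_tensor R E f = 0.
  rewrite /deg_tensor big_pred0 // => v; apply/negP => /forallP h.
  have := h ord0; rewrite f0 => /eqP iv; subst v.
  by apply: jn; rewrite (eqP (h (lift ord0 j))).
have A0 : adj_tensor R E f = 0.
  rewrite /adj_tensor; case: ifP => // im; exfalso; apply: jn; apply: cl.
  apply/existsP; exists (f @: setT); rewrite im /= -f0.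
  by rewrite !imset_f.
by rewrite /lap_tensor D0 A0; case: s; rewrite ?addr0 ?subr0.
Qed.

Definition Pf (R : realFieldType) n k (x : 'I_n -> R) (f : {ffun 'I_k.+1 -> 'I_n}) : R :=
  \prod_(j < k) x (f (lift ord0 j)).

Lemma lap_expand (R : realFieldType) n k (E : {set {set 'I_n}}) s (x : 'I_n -> R) i :
  (0 < k)%N -> (forall e, e \in E -> #|e| = k.+1) ->
  sub_apply (@lap_tensor R n k.+1 E s) setT x i =
  (deg E i)%:R * x i ^+ k + (if s then 1 else -1) * ((k`!)%:R^-1 *
     \sum_(f : {ffun 'I_k.+1 -> 'I_n} | (f ord0 == i) && (f @: setT \in E)) Pf x f).
Proof.
move=> k0 unif; rewrite /sub_apply.
rewrite (eq_bigl (fun f : {ffun 'I_k.+1 -> 'I_n} => f ord0 == i)); last first.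
  by move=> f; rewrite filterS; case: eqP => //= _; apply/forallP => j; rewrite inE.
rewrite (eq_bigr (fun f => deg_tensor R E f * Pf x f + (if s then 1 else -1) * (adj_tensor R E f * Pf x f))); last first.
  by move=> f _; rewrite (prod_lift (fun j => x (f j))) /Pf /lap_tensor; case: s; rewrite ?mulrDl ?mulrBl ?mul1r ?mulN1r ?mulNr.
rewrite big_split /= -mulr_sumr; congr (_ + _ * _).
  pose c : {ffun 'I_k.+1 -> 'I_n} := [ffun=> i].
  rewrite (bigD1 c) /=; last by rewrite ffunE.
  rewrite big1 ?addr0.
    rewrite /deg_tensor (big_pred1 i) /=; last by move=> v; apply/forallP/eqP => [h|-> j]; [by have := h ord0; rewrite ffunE => /eqP -> | by rewrite ffunE].
    by rewrite /Pf (eq_bigr (fun _ => x i)) ?prodr_const ?card_ord // => j _; rewrite ffunE.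
  move=> f /andP[/eqP f0 fc]; rewrite /deg_tensor big_pred0 ?mul0r // => v.
  apply/negP => /forallP h; have := h ord0; rewrite f0 => /eqP iv; subst v.
  by move/negP: fc; apply; apply/eqP/ffunP => j; rewrite ffunE (eqP (h j)).
rewrite mulr_sumr big_mkcond [RHS]big_mkcond /=; apply: eq_bigr => f _.
rewrite /adj_tensor /=; case: (f ord0 == i); rewrite /= ?mul0r //; case: ifP => _; by rewrite ?mul0r.
Qed.

Lemma count_Fu n k (E : {set {set 'I_n}}) u : (forall e, e \in E -> #|e| = k.+1) ->
  #|[set f : {ffun 'I_k.+1 -> 'I_n} | (f ord0 == u) && (f @: setT \in E)]| = (deg E u * k`!)%N.
Proof.
move=> unif; rewrite -sum1_card.
rewrite (partition_big (fun f : {ffun 'I_k.+1 -> 'I_n} => f @: setT) (mem (edges_at E u))) /=; last first.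
  by move=> f; rewrite !inE => /andP[/eqP <- ->]; rewrite imset_f.
rewrite /deg -sum_nat_const; apply: eq_bigr => e; rewrite inE => /andP[eE ue].
rewrite -(count_bij ue (unif e eE)) -sum1_card; apply: eq_bigl => f.
rewrite !inE; case: (f ord0 == u) => //=; case: eqP => [->|]; by rewrite ?eE ?andbF.
Qed.

Lemma prod_eq_max (R : realFieldType) k (a : 'I_k -> R) m : 0 < m ->
  (forall j, 0 <= a j <= m) -> \prod_(j < k) a j = m ^+ k -> forall j, a j = m.
Proof.
move=> m0 ha hp j; apply/eqP; rewrite eq_le (andP (ha j)).2 /= leNgt; apply/negP => lt.
have : \prod_(i < k) a i < \prod_(i < k) m.
  rewrite (bigD1 j) //= [X in _ < X](bigD1 j) //=.
  have r0 : 0 < \prod_(i < k | i != j) m by apply: prodr_gt0.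
  apply: (le_lt_trans (y := a j * \prod_(i < k | i != j) m)).
    rewrite ler_wpM2l ?(andP (ha j)).1 //; apply: ler_prod => i _; exact: ha.
  by rewrite ltr_pM2r.
by rewrite hp prodr_const card_ord ltxx.
Qed.

Lemma propagate (R : realFieldType) n k (E : {set {set 'I_n}}) s (x : 'I_n -> R)
  (C : {set 'I_n}) m u v :
  (0 < k)%N -> (forall e, e \in E -> #|e| = k.+1) ->
  (forall i, sub_apply (@lap_tensor R n k.+1 E s) setT x i = 0) ->
  (forall a b, hadj E a b -> a \in C -> b \in C) ->
  (forall w, w \in C -> `|x w| <= m) -> 0 < m ->
  u \in C -> `|x u| = m -> hadj E u v -> `|x v| = m.
Proof.
move=> k0 unif eig cl mx m0 uC xu huv.
have eq := eig u; rewrite lap_expand // in eq.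
set S := \sum_(f | _) Pf x f in eq.
set c : R := (k`!)%:R^-1 in eq.
have kf0 : (k`!)%:R != 0 :> R by rewrite pnatr_eq0 -lt0n fact_gt0.
have c0 : 0 < c by rewrite invr_gt0 ltr0n fact_gt0.
have hd : (deg E u)%:R * m ^+ k = c * `|S|.
  move/eqP: eq; rewrite addr_eq0 => /eqP eq.
  have := congr1 Num.norm eq; rewrite normrN !normrM normr_nat normrX xu => ->.
  by rewrite (gtr0_norm c0); case: (s); rewrite ?normrN normr1 mul1r.
have hFm : forall f : {ffun 'I_k.+1 -> 'I_n}, (f ord0 == u) && (f @: setT \in E) ->
    forall j, `|x (f (lift ord0 j))| <= m.
  move=> f /andP[/eqP f0 fE] j; apply: mx; apply: (cl u) => //.
  by apply/existsP; exists (f @: setT); rewrite fE -f0 !imset_f.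
set A := \sum_(f : {ffun 'I_k.+1 -> 'I_n} | (f ord0 == u) && (f @: setT \in E)) `|Pf x f|.
have SA : `|S| <= A by apply: ler_norm_sum.
have AB : A <= \sum_(f : {ffun 'I_k.+1 -> 'I_n} | (f ord0 == u) && (f @: setT \in E)) m ^+ k.
  apply: ler_sum => f Ff; rewrite /Pf normr_prod; have <- : \prod_(j < k) m = m ^+ k by rewrite prodr_const card_ord.
  by apply: ler_prod => j _; rewrite normr_ge0 hFm.
have B : \sum_(f : {ffun 'I_k.+1 -> 'I_n} | (f ord0 == u) && (f @: setT \in E)) m ^+ k = (deg E u * k`!)%:R * m ^+ k.
  rewrite -(count_Fu u unif) mulr_natl -sumr_const; apply: eq_bigl => f; by rewrite inE.
have BA : \sum_(f : {ffun 'I_k.+1 -> 'I_n} | (f ord0 == u) && (f @: setT \in E)) m ^+ k <= A.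
  rewrite -(ler_pM2l c0) B.
  have -> : c * ((deg E u * k`!)%:R * m ^+ k) = (deg E u)%:R * m ^+ k by rewrite natrM /c; field.
  by rewrite hd ler_pM2l.
have eqs : forall f : {ffun 'I_k.+1 -> 'I_n}, (f ord0 == u) && (f @: setT \in E) -> `|Pf x f| = m ^+ k.
  move=> f Ff; apply/eqP; rewrite eq_sym -subr_eq0; apply/eqP; move: f Ff.
  apply: psumr_eq0P.
    move=> f Ff; rewrite subr_ge0 /Pf normr_prod; have <- : \prod_(j < k) m = m ^+ k by rewrite prodr_const card_ord.
    by apply: ler_prod => j _; rewrite normr_ge0 hFm.
  by rewrite sumrB; apply/eqP; rewrite subr_eq0 eq_le BA AB.
case/existsP: huv => e /andP[eE /andP[ue ve]].
have : (0 < #|[set f : {ffun 'I_k.+1 -> 'I_n} | (f ord0 == u) && (f @: setT == e)]|)%N.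
  by rewrite (count_bij ue (unif e eE)) fact_gt0.
case/card_gt0P => f; rewrite inE => /andP[/eqP f0 /eqP fim].
have Ff : (f ord0 == u) && (f @: setT \in E) by rewrite f0 eqxx fim eE.
move: ve; rewrite -fim => /imsetP[j _ ->].
case: (unliftP ord0 j) => [j'|] ->; last by rewrite f0.
apply: (prod_eq_max (a := fun j => `|x (f (lift ord0 j))|) m0) => //.
  by move=> i; rewrite normr_ge0; exact: hFm.
by rewrite -normr_prod; exact: eqs.
Qed.

Theorem corollary4p1 (R : realFieldType) (n k : nat) (E : {set {set 'I_n}})
  (signless : bool) (x : 'I_n -> R) :
  (3 <= k)%N ->
  k_uniform_hypergraph k E ->
  H_eigvec (@lap_tensor R n k E signless) x 0 ->
  forall C, C \in components E -> (exists2 j, j \in C & x j != 0) ->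
    [/\ H_eigvec_sub (@lap_tensor R n k E signless) C x 0,
        supp_on x C = C &
        exists2 c : R, c != 0 & forall j, j \in C -> x j = c \/ x j = - c].
Proof.
move=> k3 [kn [E0 unif]] [_ eig] C CE [j0 j0C xj0].
case: k k3 kn unif eig => [|k] // k3 kn unif eig.
have k0 : (0 < k)%N := leq_trans (isT : (0 < 2)%N) k3.
have eig' : forall i, sub_apply (@lap_tensor R n k.+1 E signless) setT x i = 0.
  by move=> i; rewrite eig ?inE ?mul0r.
case/imsetP: CE => u0 _ Cdef.
have hsym : symmetric (hadj E).
  by move=> a b; apply: eq_existsb => e; rewrite (andbC (a \in e)).
have cl : forall a b, hadj E a b -> a \in C -> b \in C.
  by move=> a b h; rewrite Cdef !inE => cu; apply: connect_trans cu (connect1 h).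
have cl' : forall a b, hadj E a b -> b \in C -> a \in C.
  by move=> a b h; apply: cl; rewrite hsym.
case: (@arg_maxP _ _ _ j0 (mem C) (fun i => `|x i|) j0C) => i iC0 imax.
have iC : i \in C := iC0.
set m := `|x i|.
have m0 : 0 < m by apply: lt_le_trans (imax j0 j0C); rewrite normr_gt0.
have allm : forall v, v \in C -> `|x v| = m.
  pose pa := [pred v | (v \in C) ==> (`|x v| == m)].
  have one : forall a b, hadj E a b -> a \in pa -> b \in pa.
    move=> a b h; rewrite !inE => /implyP ha; apply/implyP => bC.
    have aC := cl' a b h bC; apply/eqP.
    exact: (propagate k0 unif eig' cl imax m0 aC (eqP (ha aC)) h).
  have clo : closed (hadj E) pa.
    by move=> a b h; apply/idP/idP; apply: one => //; rewrite hsym.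
  move=> v vC.
  have civ : connect (hadj E) i v.
    have ci : connect (hadj E) u0 i by move: iC; rewrite Cdef inE.
    have cv : connect (hadj E) u0 v by move: vC; rewrite Cdef inE.
    by apply: connect_trans _ cv; rewrite (sym_connect_sym hsym).
  have := closed_connect clo civ; rewrite !inE iC eqxx vC /= => /esym/eqP; done.
split.
- split; first by exists j0.
  move=> i' i'C; rewrite sub_apply_closed ?eig' ?mul0r //.
  by move=> v h; exact: cl h i'C.
- apply/setP => v; rewrite !inE; case vC: (v \in C) => //=.
  by rewrite -normr_gt0 allm.
- exists m; first by rewrite gt_eqF.
  move=> v vC; have := allm v vC; case: (lerP 0 (x v)) => h.
    by rewrite ger0_norm // => ->; left.
  by rewrite ltr0_norm // => <-; right; rewrite opprK.
Qed.
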